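(* Let $\xi$ be a random index and $\{\mu_\xi\}$ probability measures on $\mathbb{R}^d$ with $\mu_\xi\propto\exp(-V_\xi)$ such that for every $\xi$, $\log\mu_\xi$ is $L_1$-Lipschitz and $\nabla\log\mu_\xi$ is $L_2$-Lipschitz, and let $\mu\propto\exp(\mathbb{E}_\xi[\log\mu_\xi])$. Then for any probability measure $\pi_t$ on $\mathbb{R}^d$, $$\mathbb{E}_{\pi_t}\big[\mathrm{tr}^+(\nabla^2\log\mu)\big]\le dL_2,\qquad \sup_{\boldsymbol{x}}\|\nabla\cdot\Sigma_{\rm SGD}(\boldsymbol{x})\|\le4(d+1)L_1L_2,\qquad \sup_{\boldsymbol{x}}\lambda_{\max}(\Sigma_{\rm SGD}(\boldsymbol{x}))\le4L_1^2,$$ where $\Sigma_{\rm SGD}(\boldsymbol{x})=\mathbb{E}_\xi[(\nabla\log\mu_\xi(\boldsymbol{x})-\nabla\mathbb{E}_\xi[\log\mu_\xi(\boldsymbol{x})])(\nabla\log\mu_\xi(\boldsymbol{x})-\nabla\mathbb{E}_\xi[\log\mu_\xi(\boldsymbol{x})])^\top]$.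
   Context: $\mathrm{tr}^+(A)$ denotes the sum of the absolute values of the eigenvalues of a symmetric matrix $A$. For a matrix field $\Sigma$, $\nabla\cdot\Sigma$ is the vector field with $i$-th component $\sum_j\partial_j\Sigma_{ij}$, and $\|\cdot\|$ is the Euclidean norm. $\lambda_{\max}$ is the largest eigenvalue. $\log\mu$, $\log\mu_\xi$ denote log-densities. *)

(* Defs.v *)
From HB Require Import structures.
From mathcomp Require Import all_boot all_order all_algebra.
From mathcomp Require Import all_classical all_reals all_analysis.
Set Implicit Arguments. Unset Strict Implicit. Unset Printing Implicit Defensive.
Import Order.TTheory GRing.Theory Num.Theory.
Import numFieldNormedType.Exports.
Local Open Scope classical_set_scope.
Local Open Scope ring_scope.

Section Defs.
Variables (R : realType) (d : nat).

Definition evec (i : 'I_d) : 'rV[R]_d := delta_mx 0 i.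

(* Euclidean norm (the library norm on matrices is the max norm). *)
Definition enorm (v : 'rV[R]_d) : R := Num.sqrt (\sum_(i < d) v 0 i ^+ 2).

Definition partial (f : 'rV[R]_d -> R) (i : 'I_d) (x : 'rV[R]_d) : R :=
  'D_(evec i) f x.

Definition grad (f : 'rV[R]_d -> R) (x : 'rV[R]_d) : 'rV[R]_d :=
  \row_i partial f i x.

Definition hess (f : 'rV[R]_d -> R) (x : 'rV[R]_d) : 'M[R]_d :=
  \matrix_(i, j) partial (fun y => partial f i y) j x.

Definition mxdiv (S : 'rV[R]_d -> 'M[R]_d) (x : 'rV[R]_d) : 'rV[R]_d :=
  \row_i \sum_(j < d) partial (fun y => S y i j) j x.

(* tr^+(A): sum of |eigenvalues| of A counted with (algebraic) multiplicity,
   i.e. sum of |l_i| where char_poly A = prod_i ('X - l_i).  The multiset of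
   roots is unique; for a real symmetric matrix such an l exists.
   (Convention 0 if the characteristic polynomial does not split over R.) *)
Definition trplus (A : 'M[R]_d) : R :=
  match pselect (exists l : 'I_d -> R,
                   char_poly A = \prod_(i < d) ('X - (l i)%:P)) with
  | left h => \sum_(i < d) `|projT1 (cid h) i|
  | right _ => 0
  end.

Definition lambda_max (A : 'M[R]_d) : R := sup [set a | eigenvalue A a].

End Defs.

Notation Rd R d := (g_sigma_algebraType (@open 'rV[R]_d)).

(* Main.v *)
Require Import Defs.
From HB Require Import structures.
From mathcomp Require Import all_boot all_order all_algebra.
From mathcomp Require Import all_classical all_reals all_analysis.
From mathcomp Require Import ring lra.
Import Order.TTheory GRing.Theory Num.Theory.
Import numFieldNormedType.Exports.
Local Open Scope classical_set_scope.
Local Open Scope ring_scope.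

Set Implicit Arguments. Unset Strict Implicit. Unset Printing Implicit Defensive.

Section Vec.
Variables (R : realType) (d : nat).
Local Notation V := 'rV[R]_d.
Implicit Types a b m w : V.

Definition dot (a b : V) : R := \sum_(i < d) a 0 i * b 0 i.

Lemma dot_ge0 a : 0 <= dot a a.
Proof. by apply: sumr_ge0 => i _; rewrite -expr2 sqr_ge0. Qed.

Lemma enorm_ge0 a : 0 <= enorm a.
Proof. exact: sqrtr_ge0. Qed.

Lemma enorm_sq a : enorm a ^+ 2 = dot a a.
Proof.
rewrite /enorm sqr_sqrtr; last by apply: sumr_ge0 => i _; rewrite sqr_ge0.
by apply: eq_bigr => i _; rewrite expr2.
Qed.

Lemma dot0 a : enorm a = 0 -> forall i, a 0 i = 0.
Proof.
move=> h i; have h2 : dot a a = 0 by rewrite -enorm_sq h expr0n.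
have p0 : forall j, xpredT j -> 0 <= a 0 j * a 0 j.
  by move=> *; rewrite -expr2 sqr_ge0.
have := @psumr_eq0P _ _ xpredT (fun j => a 0 j * a 0 j) p0 h2 i isT.
by move/eqP; rewrite mulf_eq0 orbb => /eqP.
Qed.

Lemma CS a b : dot a b <= enorm a * enorm b.
Proof.
set A := enorm a; set B := enorm b.
have A0 : 0 <= A := enorm_ge0 a. have B0 : 0 <= B := enorm_ge0 b.
have [Az|Anz] := eqVneq A 0.
  by rewrite /dot big1 ?Az ?mul0r // => i _; rewrite (dot0 Az) mul0r.
have [Bz|Bnz] := eqVneq B 0.
  by rewrite /dot big1 ?Bz ?mulr0 // => i _; rewrite (dot0 Bz) mulr0.
have key : 0 <= \sum_(i < d) (B * a 0 i - A * b 0 i) ^+ 2.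
  by apply: sumr_ge0 => i _; rewrite sqr_ge0.
have E : \sum_(i < d) (B * a 0 i - A * b 0 i) ^+ 2 =
   B ^+ 2 * dot a a - 2 * A * B * dot a b + A ^+ 2 * dot b b.
  rewrite /dot !mulr_sumr -sumrB -big_split /=.
  by apply: eq_bigr => i _; ring.
rewrite E -!enorm_sq -/A -/B in key.
have AB : 0 < A * B by rewrite mulr_gt0 // lt0r ?Anz ?Bnz.
have : A * B * (dot a b) <= A * B * (A * B) by nra.
by rewrite ler_pM2l.
Qed.

Lemma dotNl a b : dot (- a) b = - dot a b.
Proof. by rewrite /dot -sumrN; apply: eq_bigr => i _; rewrite mxE mulNr. Qed.

Lemma enormN a : enorm (- a) = enorm a.
Proof. by rewrite /enorm; congr Num.sqrt; apply: eq_bigr => i _; rewrite mxE sqrrN. Qed.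

Lemma CS_abs a b : `|dot a b| <= enorm a * enorm b.
Proof.
rewrite ler_norml CS andbT lerNl -dotNl -(enormN a); exact: CS.
Qed.

Lemma dual K w : 0 <= K -> (forall m, dot m w <= K * enorm m) -> enorm w <= K.
Proof.
move=> K0 h; have := h w; rewrite -enorm_sq expr2.
have [->|wnz] := eqVneq (enorm w) 0; first by [].
have wp : 0 < enorm w by rewrite lt0r wnz enorm_ge0.
by rewrite [K * _]mulrC ler_pM2l.
Qed.

Lemma enorm_comp a i : `|a 0 i| <= enorm a.
Proof.
rewrite -sqrtr_sqr /enorm; apply: ler_wsqrtr.
rewrite (bigD1 i) //= lerDl; apply: sumr_ge0 => j _; exact: sqr_ge0.
Qed.

Lemma enormZ c a : enorm (c *: a) = `|c| * enorm a.
Proof.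
rewrite /enorm -sqrtr_sqr -sqrtrM ?sqr_ge0 //; congr Num.sqrt.
by rewrite mulr_sumr; apply: eq_bigr => i _; rewrite mxE exprMn.
Qed.

Lemma dot_evec a i : dot (evec R i) a = a 0 i.
Proof.
rewrite /dot (bigD1 i) //= big1 ?addr0 /evec ?mxE ?eqxx ?mul1r //.
by move=> j /negPf ji; rewrite mxE ji andbF mul0r.
Qed.

Lemma enorm_evec (i : 'I_d) : enorm (evec R i) = 1.
Proof.
rewrite /enorm (bigD1 i) //= big1 ?addr0 /evec ?mxE ?eqxx ?expr1n ?sqrtr1 //.
by move=> j /negPf ji; rewrite mxE ji andbF expr0n.
Qed.

Lemma dot_pos w : w != 0 -> 0 < dot w w.
Proof.
move=> wnz; rewrite lt0r dot_ge0 andbT; apply/eqP => h.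
move/eqP: wnz; apply; apply/rowP => i; rewrite mxE.
apply: dot0; rewrite /enorm (eq_bigr (fun j => w 0 j * w 0 j)).
  by rewrite -/(dot w w) h sqrtr0.
by move=> j _; rewrite expr2.
Qed.

Lemma dotB m a b : dot m (a - b) = dot m a - dot m b.
Proof. by rewrite /dot -sumrB; apply: eq_bigr => i _; rewrite !mxE mulrBr. Qed.

Lemma dot_row m (F : 'I_d -> R) : dot m (\row_i F i) = \sum_(i < d) m 0 i * F i.
Proof. by apply: eq_bigr => i _; rewrite mxE. Qed.

Lemma enormB_le a b Ka Kb : 0 <= Ka -> 0 <= Kb -> enorm a <= Ka -> enorm b <= Kb ->
  enorm (a - b) <= Ka + Kb.
Proof.
move=> Ka0 Kb0 ha hb; apply: dual; first by rewrite addr_ge0.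
move=> m; rewrite dotB.
have h1 := CS m a. have h2 := CS_abs m b.
have e0 := enorm_ge0 m.
have h3 : enorm m * enorm a <= enorm m * Ka by rewrite ler_wpM2l.
have h4 : enorm m * enorm b <= enorm m * Kb by rewrite ler_wpM2l.
have := ler_norm (dot m b); rewrite -normrN => h5.
have h6 : - dot m b <= `|dot m b| by rewrite -normrN ler_norm.
nra.
Qed.

End Vec.

Section Der.
Variables (R : realType) (d : nat).
Local Notation V := 'rV[R]_d.
Implicit Types (f : V -> R) (x y v : V).

Lemma RED f x v (t : R) :
  (fun h : R => h^-1 *: (((fun s : R => f (s *: v + x)) \o shift t) (h *: 1)
      - (fun s : R => f (s *: v + x)) t)) =
  (fun h : R => h^-1 *: ((f \o shift (t *: v + x)) (h *: v) - f (t *: v + x))).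
Proof.
apply/funext => h /=; congr (_ *: (_ - _)); congr f.
by rewrite [h *: 1]mulr1 scalerDl addrA.
Qed.

Lemma derivable_line f x v (t : R) :
  derivable (fun s : R => f (s *: v + x)) t 1 <-> derivable f (t *: v + x) v.
Proof. by rewrite /derivable RED. Qed.

Lemma derive_line f x v (t : R) :
  'D_1 (fun s : R => f (s *: v + x)) t = 'D_v f (t *: v + x).
Proof. by rewrite /derive RED. Qed.

Lemma D_lin f y v : differentiable f y ->
  'D_v f y = \sum_(i < d) v 0 i * 'D_(evec R i) f y.
Proof.
move=> df; rewrite deriveE // {1}(row_sum_delta v) linear_sum.
by apply: eq_bigr => i _; rewrite linearZ deriveE.
Qed.

Lemma D_bound f y v C : derivable f y v ->
  (forall h : R, h != 0 -> `|f (h *: v + y) - f y| <= C * `|h|) ->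
  `|'D_v f y| <= C.
Proof.
move=> df hb.
have hc : (fun h : R => h^-1 *: ((f \o shift y) (h *: v) - f y)) @ (0:R)^' --> 'D_v f y := df.
move/cvgrPdist_le : hc => hc.
apply/ler_addgt0Pr => e e0.
near (0:R)^' => h.
have hh : `|'D_v f y - h^-1 *: ((f \o shift y) (h *: v) - f y)| <= e by near: h; exact: hc.
have hnz : h != 0 by near: h; exact: nbhs_dnbhs_neq.
have q : `|h^-1 *: ((f \o shift y) (h *: v) - f y)| <= C.
  rewrite normrZ normfV /= -(@ler_pM2l _ `|h|); last by rewrite normr_gt0.
  rewrite mulrA mulfV ?normr_eq0 // mul1r.
  by rewrite mulrC; exact: hb.
have := ler_normD ('D_v f y - h^-1 *: ((f \o shift y) (h *: v) - f y)) (h^-1 *: ((f \o shift y) (h *: v) - f y)).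
rewrite subrK => H; lra.
Unshelve. all: by end_near.
Qed.

Lemma Dlin_comb (h : 'I_d -> V -> R) (m : 'I_d -> R) y v :
  (forall i, derivable (h i) y v) ->
  derivable (fun z => \sum_(i < d) m i * h i z) y v /\
  'D_v (fun z => \sum_(i < d) m i * h i z) y = \sum_(i < d) m i * 'D_v (h i) y.
Proof.
move=> dh.
have E : (fun z => \sum_(i < d) m i * h i z) = \sum_(i < d) (m i *: h i).
  by apply/funext => z; rewrite fct_sumE.
rewrite E; split.
  by apply: derivable_sum => i; apply: derivableZ.
rewrite derive_sum; last by move=> i; apply: derivableZ.
by apply: eq_bigr => i _; rewrite deriveZ.
Qed.

Lemma VLD (h : 'I_d -> V -> R) y v K : 0 <= K ->
  (forall i, derivable (h i) y v) ->
  (forall t : R, t != 0 -> enorm (\row_i (h i (t *: v + y) - h i y)) <= K * `|t|) ->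
  enorm (\row_i 'D_v (h i) y) <= K.
Proof.
move=> K0 dh hl; apply: dual => // m.
have [_ E] := @Dlin_comb h (fun i => m 0 i) y v dh.
have -> : dot m (\row_i 'D_v (h i) y) = \sum_(i < d) m 0 i * 'D_v (h i) y.
  by apply: eq_bigr => i _; rewrite mxE.
rewrite -E; apply: le_trans (ler_norm _) _.
rewrite mulrC; apply: D_bound; first by have [] := @Dlin_comb h (fun i => m 0 i) y v dh.
move=> t tnz; rewrite -sumrB.
have -> : \sum_(i < d) (m 0 i * h i (t *: v + y) - m 0 i * h i y) =
    dot m (\row_i (h i (t *: v + y) - h i y)).
  by apply: eq_bigr => i _; rewrite mxE mulrBr.
apply: le_trans (CS_abs _ _) _.
rewrite -mulrA ler_wpM2l ?enorm_ge0 //; exact: hl.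
Qed.

End Der.

Section Meas.
Variables (R : realType) (dT : measure_display) (T : measurableType dT) (P : probability T R).
Implicit Types (phi psi : T -> R).

Definition Int phi := P.-integrable setT (EFin \o phi).

Lemma Int_meas phi : Int phi -> measurable_fun setT phi.
Proof. by case/integrableP => /measurable_realfun.measurable_EFinP. Qed.

Lemma Int_bdd phi M : measurable_fun setT phi -> (forall xi, `|phi xi| <= M) -> Int phi.
Proof.
move=> mphi hM; apply: measurable_bounded_integrable => //.
  by apply: (le_lt_trans (probability_le1 P measurableT)); exact: ltry.
exists M; split; first by rewrite num_real.
by move=> M' MM' x _; apply: le_trans (hM x) _; apply: ltW.
Qed.

Lemma Int_cst c : Int (fun _ => c).
Proof. by apply: (@Int_bdd _ `|c|) => // xi; exact: measurable_cst. Qed.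

Lemma IntD phi psi : Int phi -> Int psi -> Int (fun xi => phi xi + psi xi).
Proof.
move=> h1 h2; rewrite /Int (_ : _ \o _ = (EFin \o phi) \+ (EFin \o psi)) //.
exact: integrableD.
Qed.

Lemma IntZ c phi : Int phi -> Int (fun xi => c * phi xi).
Proof.
move=> h; rewrite /Int (_ : _ \o _ = (fun x => (c%:E * (EFin \o phi) x)%E)) //.
exact: integrableZl.
Qed.

Lemma IntB phi psi : Int phi -> Int psi -> Int (fun xi => phi xi - psi xi).
Proof.
move=> h1 h2; have := IntD h1 (IntZ (-1) h2).
by apply: eq_integrable => // x _ /=; rewrite mulN1r.
Qed.

Lemma IntM phi psi M1 M2 : Int phi -> Int psi -> (forall xi, `|phi xi| <= M1) ->
  (forall xi, `|psi xi| <= M2) -> Int (fun xi => phi xi * psi xi).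
Proof.
move=> h1 h2 b1 b2; apply: (@Int_bdd _ (M1 * M2)).
  by apply: measurable_realfun.measurable_funM; apply: Int_meas.
move=> xi; rewrite normrM; apply: ler_pM => //.
Qed.

Lemma Int_sum n (phi : 'I_n -> T -> R) : (forall i, Int (phi i)) ->
  Int (fun xi => \sum_(i < n) phi i xi).
Proof.
move=> h; rewrite /Int (_ : _ \o _ = (fun x => \sum_(i < n) (EFin \o phi i) x)).
  apply: (@integrable_sum _ _ _ P setT measurableT _ (index_enum _) xpredT (fun i => EFin \o phi i)) => i _; exact: h.
by apply/funext => x /=; rewrite -sumEFin.
Qed.

Lemma Ri_cst c : \int[P]_xi c = c.
Proof.
rewrite Rintegral_cst // -[RHS]mulr1; congr (_ * _).
rewrite -[RHS]/(fine 1%E); congr fine; exact: probability_setT.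
Qed.

Lemma Ri_le phi psi : Int phi -> Int psi -> (forall xi, phi xi <= psi xi) ->
  \int[P]_xi phi xi <= \int[P]_xi psi xi.
Proof. by move=> h1 h2 h; apply: le_Rintegral. Qed.

Lemma Ri_abs phi M : Int phi -> (forall xi, `|phi xi| <= M) -> `|\int[P]_xi phi xi| <= M.
Proof.
move=> h hM; apply: le_trans (le_normr_Rintegral _ _) _ => //.
rewrite -[X in _ <= X]Ri_cst; apply: Ri_le => //; last exact: Int_cst.
exact: integrable_norm.
Qed.

Lemma RiZ c phi : Int phi -> \int[P]_xi (c * phi xi) = c * \int[P]_xi phi xi.
Proof. by move=> h; rewrite RintegralZl. Qed.

Lemma RiD phi psi : Int phi -> Int psi ->
  \int[P]_xi (phi xi + psi xi) = \int[P]_xi phi xi + \int[P]_xi psi xi.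
Proof. by move=> h1 h2; rewrite RintegralD. Qed.

Lemma RiB phi psi : Int phi -> Int psi ->
  \int[P]_xi (phi xi - psi xi) = \int[P]_xi phi xi - \int[P]_xi psi xi.
Proof. by move=> h1 h2; rewrite RintegralB. Qed.

Lemma Ri_sum n (phi : 'I_n -> T -> R) : (forall i, Int (phi i)) ->
  \int[P]_xi (\sum_(i < n) phi i xi) = \sum_(i < n) \int[P]_xi phi i xi.
Proof.
elim: n phi => [|n IH] phi h.
  by rewrite big_ord0; under eq_Rintegral do rewrite big_ord0; rewrite Ri_cst.
rewrite big_ord_recr /=; under eq_Rintegral do rewrite big_ord_recr /=.
rewrite RiD; first by rewrite IH.
  by apply: Int_sum.
exact: h.
Qed.

End Meas.

Section Meas2.
Variables (R : realType) (d : nat) (dT : measure_display) (T : measurableType dT) (P : probability T R).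
Local Notation V := 'rV[R]_d.
Local Notation Int := (@Int R dT T P).

Lemma JV (u : T -> V) K : 0 <= K -> (forall i, Int (fun xi => u xi 0 i)) ->
  (forall xi, enorm (u xi) <= K) -> enorm (\row_i \int[P]_xi u xi 0 i) <= K.
Proof.
move=> K0 hi hK; apply: dual => // m.
have -> : dot m (\row_i \int[P]_xi u xi 0 i) = \int[P]_xi dot m (u xi).
  rewrite /dot Ri_sum; last by move=> i; apply: IntZ.
  by apply: eq_bigr => i _; rewrite mxE RiZ.
rewrite -[X in _ <= X](Ri_cst P); apply: Ri_le.
- by apply: Int_sum => i; apply: IntZ.
- exact: Int_cst.
move=> xi; apply: le_trans (CS _ _) _; rewrite mulrC ler_wpM2r ?enorm_ge0 //.
Qed.

Lemma dint (F : T -> V -> R) x v C : 0 <= C ->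
  (forall y, Int (fun xi => F xi y)) -> (forall xi y, derivable (F xi) y v) ->
  (forall xi y, `|'D_v (F xi) y| <= C) ->
  derivable (fun y => \int[P]_xi F xi y) x v /\
  'D_v (fun y => \int[P]_xi F xi y) x = \int[P]_xi 'D_v (F xi) x.
Proof.
move=> C0 hI hD hC.
pose f := fun (t : R) xi => F xi (t *: v + x).
have Ia : (`](-1), 1[%classic : set R) 0 by rewrite /= in_itv /= ltrN10 ltr01.
have intf : forall t, (`](-1), 1[%classic : set R) t -> P.-integrable setT (EFin \o f t).
  by move=> t _; exact: hI.
have derf1 : forall t xi, (`](-1), 1[%classic : set R) t -> setT xi -> derivable (f ^~ xi) t 1.
  by move=> t xi _ _; apply/derivable_line.
have G_ge0 : forall xi : T, 0 <= (cst C) xi by [].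
have intG : P.-integrable setT (EFin \o cst C) by exact: Int_cst.
have G_ub : forall t xi, (`](-1), 1[%classic : set R) t -> setT xi -> `|partial1of2 f t xi| <= cst C xi.
  by move=> t xi _ _; rewrite partial1of2E /f derive_line; exact: hC.
have D1 := derivable_under_integral measurableT Ia intf derf1 G_ge0 intG G_ub.
have D2 := differentiation_under_integral measurableT Ia intf derf1 G_ge0 intG G_ub.
split.
  by have := derivable_line (fun y => \int[P]_xi F xi y) x v 0; rewrite scale0r add0r => <-.
have := derive_line (fun y => \int[P]_xi F xi y) x v 0; rewrite scale0r add0r => <-.
rewrite -derive1E D2; apply: eq_Rintegral => xi _.
by rewrite partial1of2E /f derive_line scale0r add0r.
Qed.

Lemma Dmeas (F : T -> V -> R) x v C :
  (forall y, Int (fun xi => F xi y)) -> (forall xi, derivable (F xi) x v) ->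
  (forall xi, `|'D_v (F xi) x| <= C) ->
  Int (fun xi => 'D_v (F xi) x).
Proof.
move=> hI hD hC; apply: (@Int_bdd _ _ _ P _ C) => //.
pose h n xi := (n.+1%:R : R) * (F xi ((n.+1%:R)^-1 *: v + x) - F xi x).
apply: (@measurable_realfun.measurable_fun_cvg _ _ _ _ h).
  move=> n; apply: measurable_realfun.measurable_funM; first exact: measurable_cst.
  by apply: measurable_realfun.measurable_funB; apply: Int_meas.
move=> xi _.
have hc : (fun t : R => t^-1 *: ((F xi \o shift x) (t *: v) - F xi x)) @ (0:R)^' --> 'D_v (F xi) x := hD xi.
move/cvgr_dnbhsP : hc => /(_ (@harmonic R)) hc.
have : (harmonic n) @[n --> \oo] --> (0:R) by exact: cvg_harmonic.
move=> hh; have := hc (conj (fun n => lt0r_neq0 (harmonic_gt0 n)) hh).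
by apply: cvg_trans; apply: near_eq_cvg; near=> n; rewrite /h /= invrK.
Unshelve. all: by end_near.
Qed.

End Meas2.

Lemma int_le_bound (R : realType) (dU : measure_display) (U : measurableType dU)
  (Q : probability U R) (phi : U -> R) (c : R) : 0 <= c ->
  (forall x, 0 <= phi x <= c) -> (\int[Q]_(x in setT) (phi x)%:E <= c%:E)%E.
Proof.
move=> c0 hphi.
apply: (@le_trans _ _ (\int[Q]_(x in setT) (cst c%:E) x)%E).
  rewrite ge0_integralTE; last by move=> x; rewrite lee_fin; case/andP: (hphi x).
  rewrite ge0_integralTE; last by move=> x; rewrite lee_fin.
  apply: le_ereal_sup => _ [h hh <-]; exists h => //= x.
  apply: le_trans (hh x) _; rewrite lee_fin; by case/andP: (hphi x).
rewrite integral_cst //.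
rewrite -[X in (_ <= X)%E]mule1; apply: lee_wpmul2l; first by rewrite lee_fin.
by rewrite -(probability_setT Q).
Qed.

Unset Implicit Arguments. Set Strict Implicit. Set Printing Implicit Defensive.

Lemma bnd2 (R : realType) (a b p q L1 L2 : R) : `|a| <= 2 * L1 -> `|b| <= 2 * L1 ->
  `|p| <= 2 * L2 -> `|q| <= 2 * L2 -> `|a * p + b * q| <= 8 * L1 * L2.
Proof.
move=> ha hb hp hq; apply: le_trans (ler_normD _ _) _; rewrite !normrM.
have q1 := ler_pM (normr_ge0 a) (normr_ge0 p) ha hp.
have q2 := ler_pM (normr_ge0 b) (normr_ge0 q) hb hq.
apply: le_trans (lerD q1 q2) _.
have -> : 2 * L1 * (2 * L2) + 2 * L1 * (2 * L2) = 8 * L1 * L2 by ring.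
exact: lexx.
Qed.

Lemma fin_bnd (R : realType) (d : nat) (e da tr X Y L1 L2 : R) : 0 <= e -> 0 <= L1 -> 0 <= L2 ->
  `|da| <= e * (2 * L1) -> `|tr| <= d%:R * (2 * L2) -> `|X| <= e * (L2 * (2 * L1)) ->
  `|Y| <= e * (L2 * (2 * L1)) -> da * tr + (X - Y) <= 4 * (d%:R + 1) * L1 * L2 * e.
Proof.
move=> e0 L10 L20 h1 h2 h3 h4.
have h5 : `|da * tr| <= e * (2 * L1) * (d%:R * (2 * L2)).
  by rewrite normrM; apply: ler_pM.
have h6 := ler_norm (da * tr). have h7 := ler_norm X.
have h8 : - Y <= `|Y| by rewrite -normrN ler_norm.
have -> : 4 * (d%:R + 1) * L1 * L2 * e =
  e * (2 * L1) * (d%:R * (2 * L2)) + e * (L2 * (2 * L1)) + e * (L2 * (2 * L1)) by ring.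
lra.
Qed.

Theorem lemma3 (R : realType) (d : nat)
  (dT : measure_display) (T : measurableType dT) (P : probability T R)
  (logmuxi : T -> 'rV[R]_d -> R) (L1 L2 : R) (logZ : R)
  (pit : probability (Rd R d) R) :
  0 <= L1 -> 0 <= L2 ->
  (forall xi x, differentiable (logmuxi xi) x) ->
  (forall xi x, differentiable (grad (logmuxi xi)) x) ->
  (forall x, P.-integrable setT (fun xi => (logmuxi xi x)%:E)) ->
  (forall xi x y, `|logmuxi xi x - logmuxi xi y| <= L1 * enorm (x - y)) ->
  (forall xi x y,
     enorm (grad (logmuxi xi) x - grad (logmuxi xi) y) <= L2 * enorm (x - y)) ->
  let Elogmu := fun x : 'rV[R]_d => Rintegral P setT (fun xi => logmuxi xi x) in
  let logmu := fun x : 'rV[R]_d => Elogmu x - logZ in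
  let Sigma := fun x : 'rV[R]_d =>
    \matrix_(i < d, j < d)
      Rintegral P setT (fun xi =>
        (grad (logmuxi xi) x 0 i - grad Elogmu x 0 i) *
        (grad (logmuxi xi) x 0 j - grad Elogmu x 0 j)) in
  [/\ (\int[pit]_(x in setT) (trplus (hess logmu x))%:E <= (d%:R * L2)%:E)%E,
      (forall x, enorm (mxdiv Sigma x) <= 4 * (d%:R + 1) * L1 * L2) &
      (forall x, lambda_max (Sigma x) <= 4 * L1 ^+ 2)].
Proof.
move=> L10 L20 hdf hdg hint hL1 hL2 Elogmu logmu Sigma.
pose g (i : 'I_d) xi y := partial (logmuxi xi) i y.
have en0 := @enorm_ge0 R d.
have dg : forall i xi y, differentiable (g i xi) y.
  move=> i xi y.
  have -> : g i xi = (fun M : 'M[R]_(1, d) => M 0 i) \o grad (logmuxi xi).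
    by apply/funext => z; rewrite /= mxE.
  have := differentiable_comp (hdg xi y) (differentiable_coord (grad (logmuxi xi) y) 0 i). exact.
have Lf : forall xi y v (h : R), `|logmuxi xi (h *: v + y) - logmuxi xi y| <= (L1 * enorm v) * `|h|.
  move=> xi y v h; apply: le_trans (hL1 _ _ _) _.
  by rewrite addrK enormZ mulrA [X in _ <= X]mulrAC.
have Df : forall xi y v, `|'D_v (logmuxi xi) y| <= L1 * enorm v.
  by move=> xi y v; apply: D_bound; [exact: diff_derivable|move=> h _; exact: Lf].
have gB : forall xi y, enorm (grad (logmuxi xi) y) <= L1.
  move=> xi y; apply: dual => // m.
  have -> : dot m (grad (logmuxi xi) y) = 'D_m (logmuxi xi) y.
    by rewrite D_lin // /dot; apply: eq_bigr => i _; rewrite mxE.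
  by apply: le_trans (ler_norm _) _; apply: Df.
have Lg : forall xi y v (h : R), enorm (\row_i (g i xi (h *: v + y) - g i xi y)) <= (L2 * enorm v) * `|h|.
  move=> xi y v h.
  have -> : \row_i (g i xi (h *: v + y) - g i xi y) = grad (logmuxi xi) (h *: v + y) - grad (logmuxi xi) y.
    by apply/rowP => i; rewrite !mxE.
  by apply: le_trans (hL2 _ _ _) _; rewrite addrK enormZ mulrA [X in _ <= X]mulrAC.
have Dg : forall i xi y v, `|'D_v (g i xi) y| <= L2 * enorm v.
  move=> i xi y v; apply: D_bound; first exact: diff_derivable.
  move=> h _; apply: le_trans (Lg xi y v h).
  by have := enorm_comp (\row_i (g i xi (h *: v + y) - g i xi y)) i; rewrite mxE.
have Ig : forall i y, Int P (fun xi => g i xi y).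
  move=> i y; apply: (@Dmeas _ _ _ _ P logmuxi y (evec R i) (L1 * enorm (evec R i))) => //.
  by move=> xi; exact: diff_derivable.
have dE : forall y v, derivable Elogmu y v /\ 'D_v Elogmu y = \int[P]_xi 'D_v (logmuxi xi) y.
  move=> y v; apply: (@dint _ _ _ _ P logmuxi y v (L1 * enorm v)) => //.
  - by rewrite mulr_ge0.
  - by move=> xi z; exact: diff_derivable.
pose G i y := partial Elogmu i y.
have GE : forall i y, G i y = \int[P]_xi g i xi y.
  by move=> i y; exact: (dE y (evec R i)).2.
have gcomp : forall xi y i, grad (logmuxi xi) y 0 i = g i xi y by move=> *; rewrite mxE.
have Gcomp : forall y i, grad Elogmu y 0 i = G i y by move=> *; rewrite mxE.
have GB : forall y, enorm (grad Elogmu y) <= L1.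
  move=> y; have -> : grad Elogmu y = \row_i \int[P]_xi (grad (logmuxi xi) y) 0 i.
    apply/rowP => i; rewrite Gcomp mxE GE; apply: eq_Rintegral => xi _; by rewrite gcomp.
  apply: JV => // i; rewrite (_ : (fun xi => _) = (fun xi => g i xi y)) //.
  by apply/funext => xi; rewrite gcomp.
have GiE : forall i, G i = (fun y => \int[P]_xi g i xi y).
  by move=> i; apply/funext => y; exact: GE.
have dG : forall i y v, derivable (G i) y v /\ 'D_v (G i) y = \int[P]_xi 'D_v (g i xi) y.
  move=> i y v; rewrite GiE; apply: (@dint _ _ _ _ P (g i) y v (L2 * enorm v)) => //.
  - by rewrite mulr_ge0.
  - by move=> xi z; exact: diff_derivable.
have IDg : forall i y v, Int P (fun xi => 'D_v (g i xi) y).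
  move=> i y v; apply: (@Dmeas _ _ _ _ P (g i) y v (L2 * enorm v)) => //.
  by move=> xi; exact: diff_derivable.
have GL : forall i y v, 'D_v (G i) y = \sum_(j < d) v 0 j * 'D_(evec R j) (G i) y.
  move=> i y v; rewrite (dG i y v).2.
  under eq_Rintegral => xi _ do rewrite (D_lin v (dg i xi y)).
  rewrite Ri_sum; last by move=> j; apply: IntZ; exact: IDg.
  by apply: eq_bigr => j _; rewrite RiZ ?(dG i y _).2 //.
have LG : forall y v (h : R), enorm (\row_i (G i (h *: v + y) - G i y)) <= (L2 * enorm v) * `|h|.
  move=> y v h.
  have -> : \row_i (G i (h *: v + y) - G i y) =
      \row_i \int[P]_xi (\row_k (g k xi (h *: v + y) - g k xi y)) 0 i.
    apply/rowP => i; rewrite !mxE !GE -RiB //; apply: eq_Rintegral => xi _; by rewrite mxE.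
  apply: JV; first by rewrite !mulr_ge0.
    move=> i; rewrite (_ : (fun xi => _) = (fun xi => g i xi (h *: v + y) - g i xi y)).
      by apply: IntB.
    by apply/funext => xi; rewrite mxE.
  by move=> xi; exact: Lg.
have DGv : forall y v, enorm (\row_i 'D_v (G i) y) <= L2 * enorm v.
  move=> y v; apply: VLD; first by rewrite mulr_ge0.
    by move=> i; exact: (dG i y v).1.
  by move=> t _; exact: LG.
have DG : forall i y v, `|'D_v (G i) y| <= L2 * enorm v.
  move=> i y v; have := enorm_comp (\row_i 'D_v (G i) y) i; rewrite mxE => h.
  exact: le_trans h (DGv y v).
have hessE : forall y i j, hess logmu y i j = 'D_(evec R j) (G i) y.
  move=> y i j; rewrite mxE /partial.
  suff -> : (fun z => 'D_(evec R i) logmu z) = G i by [].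
  apply/funext => z; rewrite /G /partial /logmu.
  have -> : (fun x => Elogmu x - logZ) = Elogmu - cst logZ by apply/funext.
  rewrite deriveB ?derive_cst ?subr0 //; first exact: (dE z _).1.
have P1 : forall y, 0 <= trplus (hess logmu y) <= d%:R * L2.
  move=> y; rewrite /trplus; case: pselect => [h|_]; last by rewrite lexx /= mulr_ge0.
  set l := projT1 (cid h).
  have hl : char_poly (hess logmu y) = \prod_(i < d) ('X - (l i)%:P) := projT2 (cid h).
  apply/andP; split; first by apply: sumr_ge0.
  have -> : d%:R * L2 = \sum_(i < d) L2 by rewrite sumr_const card_ord mulr_natl.
  apply: ler_sum => i _.
  have ev : eigenvalue (hess logmu y) (l i).
    by rewrite eigenvalue_root_char hl /root (bigD1 i) //= hornerM hornerXsubC subrr mul0r.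
  case/eigenvalueP: ev => w hw wnz.
  have key : \sum_(k < d) w 0 k * 'D_w (G k) y = l i * dot w w.
    under eq_bigr => k _ do rewrite GL mulr_sumr.
    rewrite exchange_big /= /dot mulr_sumr; apply: eq_bigr => j _.
    have hwj := congr1 (fun M : 'rV[R]_d => M 0 j) hw; rewrite /= !mxE in hwj.
    transitivity (w 0 j * \sum_(k < d) w 0 k * hess logmu y k j).
      by rewrite mulr_sumr; apply: eq_bigr => k _; rewrite hessE; ring.
    by rewrite hwj; ring.
  have bnd : `|\sum_(k < d) w 0 k * 'D_w (G k) y| <= L2 * dot w w.
    rewrite -dot_row; apply: le_trans (CS_abs _ _) _.
    apply: le_trans (ler_wpM2l (en0 w) (DGv y w)) _.
    by rewrite -enorm_sq expr2 mulrCA.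
  rewrite key normrM (ger0_norm (dot_ge0 w)) in bnd.
  by rewrite -(ler_pM2r (dot_pos wnz)).
pose A i xi z := g i xi z - G i z.
have gcB : forall i xi z, `|g i xi z| <= L1.
  move=> i xi z; have := enorm_comp (grad (logmuxi xi) z) i; rewrite gcomp => h.
  exact: le_trans h (gB xi z).
have GcB : forall i z, `|G i z| <= L1.
  move=> i z; have := enorm_comp (grad Elogmu z) i; rewrite Gcomp => h.
  exact: le_trans h (GB z).
have AB : forall i xi z, `|A i xi z| <= 2 * L1.
  move=> i xi z; apply: le_trans (ler_normB _ _) _.
  have := gcB i xi z; have := GcB i z; lra.
have aB : forall xi z, enorm (\row_k A k xi z) <= 2 * L1.
  move=> xi z.
  have -> : \row_k A k xi z = grad (logmuxi xi) z - grad Elogmu z.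
    by apply/rowP => k; rewrite !mxE.
  rewrite mulr2n mulrDl mul1r; exact: enormB_le.
have IA : forall i z, Int P (fun xi => A i xi z).
  by move=> i z; apply: IntB => //; exact: Int_cst.
have SigE : forall z i j, Sigma z i j = \int[P]_xi (A i xi z * A j xi z).
  by move=> z i j; rewrite mxE; apply: eq_Rintegral => xi _; rewrite !gcomp !Gcomp.
have AE : forall i xi z, A i xi z = g i xi z - G i z by [].
clearbody A.
split.
- apply: int_le_bound => //; exact: mulr_ge0.
- move=> y.
  have Dgv : forall xi v, enorm (\row_i 'D_v (g i xi) y) <= L2 * enorm v.
    move=> xi v; apply: VLD; first by rewrite mulr_ge0.
      by move=> i; exact: diff_derivable.
    by move=> t _; exact: Lg.
  have dA : forall j xi z v, derivable (A j xi) z v /\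
      'D_v (A j xi) z = 'D_v (g j xi) z - 'D_v (G j) z.
    move=> j xi z v.
    have -> : A j xi = g j xi - G j by apply/funext => u; rewrite AE.
    have h1 : derivable (g j xi) z v by exact: diff_derivable.
    have h2 : derivable (G j) z v by exact: (dG j z v).1.
    by split; [exact: derivableB | exact: deriveB].
  pose DA i k xi := 'D_(evec R k) (g i xi) y - 'D_(evec R k) (G i) y.
  have DAdef : forall i k xi, DA i k xi = 'D_(evec R k) (g i xi) y - 'D_(evec R k) (G i) y by [].
  have DAB : forall i k xi, `|DA i k xi| <= 2 * L2.
    move=> i k xi; rewrite DAdef; apply: le_trans (ler_normB _ _) _.
    rewrite mulr2n mulrDl mul1r; apply: lerD.
      by have := Dg i xi y (evec R k); rewrite enorm_evec mulr1.
    by have := DG i y (evec R k); rewrite enorm_evec mulr1.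
  have IDA : forall i k, Int P (DA i k).
    by move=> i k; apply: IntB; [exact: IDg | exact: Int_cst].
  have DAE : forall i k xi, 'D_(evec R k) (A i xi) y = DA i k xi.
    by move=> i k xi; rewrite (dA i xi y _).2.
  clearbody DA.
  have scE : forall a b : R, a *: b = a * b by [].
  have Afun : forall i k xi, (fun z => A i xi z * A k xi z) = A i xi * A k xi by [].
  have col : forall i k, partial (fun z => Sigma z i k) k y =
      \int[P]_xi (A i xi y * DA k k xi + A k xi y * DA i k xi).
    move=> i k; rewrite /partial.
    have -> : (fun z => Sigma z i k) = (fun z => \int[P]_xi (A i xi z * A k xi z)).
      by apply/funext => z; rewrite SigE.
    have C0 : 0 <= 8 * L1 * L2 by rewrite !mulr_ge0.
    have hI : forall z, Int P (fun xi => A i xi z * A k xi z).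
      move=> z; exact: (IntM (IA i z) (IA k z) (AB i ^~ z) (AB k ^~ z)).
    have hD : forall xi z, derivable (fun z => A i xi z * A k xi z) z (evec R k).
      by move=> xi z; rewrite Afun; apply: derivableM; [exact: (dA _ _ _ _).1|exact: (dA _ _ _ _).1].
    have hC : forall xi z, `|'D_(evec R k) (fun z => A i xi z * A k xi z) z| <= 8 * L1 * L2.
      move=> xi z; rewrite Afun (deriveM (dA i xi z _).1 (dA k xi z _).1).
      rewrite (dA i xi z _).2 (dA k xi z _).2 !scE.
      have b1 := AB i xi z; have b2 := AB k xi z.
      have p1 : `|'D_(evec R k) (g k xi) z - 'D_(evec R k) (G k) z| <= 2 * L2.
        apply: le_trans (ler_normB _ _) _; rewrite mulr2n mulrDl mul1r; apply: lerD.
          by have := Dg k xi z (evec R k); rewrite enorm_evec mulr1.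
        by have := DG k z (evec R k); rewrite enorm_evec mulr1.
      have p2 : `|'D_(evec R k) (g i xi) z - 'D_(evec R k) (G i) z| <= 2 * L2.
        apply: le_trans (ler_normB _ _) _; rewrite mulr2n mulrDl mul1r; apply: lerD.
          by have := Dg i xi z (evec R k); rewrite enorm_evec mulr1.
        by have := DG i z (evec R k); rewrite enorm_evec mulr1.
      exact: (@bnd2 R _ _ _ _ _ _ b1 b2 p1 p2).
    have [_ ->] := @dint _ _ _ _ P (fun xi z => A i xi z * A k xi z) y (evec R k) _ C0 hI hD hC.
    apply: eq_Rintegral => xi _.
    by rewrite Afun (deriveM (dA i xi y _).1 (dA k xi y _).1) !DAE !scE.
  have IT : forall i k, Int P (fun xi => A i xi y * DA k k xi + A k xi y * DA i k xi).
    move=> i k; apply: IntD.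
      exact: (IntM (IA i y) (IDA k k) (AB i ^~ y) (DAB k k)).
    exact: (IntM (IA k y) (IDA i k) (AB k ^~ y) (DAB i k)).
  have MD : mxdiv Sigma y = \row_i \int[P]_xi
      (\row_i0 \sum_(k < d) (A i0 xi y * DA k k xi + A k xi y * DA i0 k xi)) 0 i.
    apply/rowP => i; rewrite !mxE.
    under eq_bigr => k _ do rewrite col.
    rewrite -Ri_sum; last by move=> k; exact: IT.
    by apply: eq_Rintegral => xi _; rewrite mxE.
  have K0 : 0 <= 4 * (d%:R + 1) * L1 * L2 by rewrite !mulr_ge0 // addr_ge0.
  rewrite MD; apply: JV => //.
    move=> i; rewrite (_ : (fun xi => _) =
      (fun xi => \sum_(k < d) (A i xi y * DA k k xi + A k xi y * DA i k xi))).
      by apply: Int_sum => k; exact: IT.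
    by apply/funext => xi; rewrite mxE.
  move=> xi; apply: dual => // m.
  have E2 : forall i, \sum_(k < d) A k xi y * DA i k xi =
      'D_(\row_k A k xi y) (g i xi) y - 'D_(\row_k A k xi y) (G i) y.
    move=> i; rewrite (D_lin (\row_k A k xi y) (dg i xi y)) (GL i y (\row_k A k xi y)) -sumrB.
    by apply: eq_bigr => k _; rewrite DAdef mxE mulrBr.
  have Em : dot m (\row_i \sum_(k < d) (A i xi y * DA k k xi + A k xi y * DA i k xi)) =
      dot m (\row_k A k xi y) * (\sum_(k < d) DA k k xi) +
      (dot m (\row_i 'D_(\row_k A k xi y) (g i xi) y) -
       dot m (\row_i 'D_(\row_k A k xi y) (G i) y)).
    rewrite !dot_row mulr_suml -sumrB -big_split /=; apply: eq_bigr => i _.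
    by rewrite big_split /= -mulr_sumr E2 mulrDr mulrBr mulrA.
  rewrite Em; apply: fin_bnd => //.
  - exact: le_trans (CS_abs _ _) (ler_wpM2l (en0 m) (aB xi y)).
  - apply: le_trans (ler_norm_sum _ _ _) _.
    have -> : d%:R * (2 * L2) = \sum_(k < d) (2 * L2) by rewrite sumr_const card_ord mulr_natl.
    by apply: ler_sum => k _; exact: DAB.
  - apply: le_trans (CS_abs _ _) (ler_wpM2l (en0 m) _).
    exact: le_trans (Dgv xi _) (ler_wpM2l L20 (aB xi y)).
  - apply: le_trans (CS_abs _ _) (ler_wpM2l (en0 m) _).
    exact: le_trans (DGv y _) (ler_wpM2l L20 (aB xi y)).
- move=> y; rewrite /lambda_max.
  have ub : forall a, eigenvalue (Sigma y) a -> a <= 4 * L1 ^+ 2.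
    move=> a /eigenvalueP [w hw wnz].
    have IdA : Int P (fun xi => dot w (\row_k A k xi y)).
      rewrite (_ : (fun xi => _) = (fun xi => \sum_(k < d) w 0 k * A k xi y)).
        by apply: Int_sum => k; apply: IntZ.
      by apply/funext => xi; rewrite dot_row.
    have dB : forall xi, `|dot w (\row_k A k xi y)| <= enorm w * (2 * L1).
      move=> xi; apply: le_trans (CS_abs _ _) _; exact: ler_wpM2l.
    have key : a * dot w w = \int[P]_xi (dot w (\row_k A k xi y)) ^+ 2.
      transitivity (\sum_(j < d) w 0 j * (w *m Sigma y) 0 j).
        by rewrite hw /dot mulr_sumr; apply: eq_bigr => j _; rewrite mxE; ring.
      have E1 : forall xi, (dot w (\row_k A k xi y)) ^+ 2 =
          \sum_(j < d) (w 0 j * \sum_(i < d) (w 0 i * (A i xi y * A j xi y))).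
        move=> xi; rewrite dot_row expr2 mulr_suml.
        under eq_bigr => i _ do rewrite mulr_sumr.
        rewrite exchange_big /=; apply: eq_bigr => j _; rewrite mulr_sumr.
        by apply: eq_bigr => i _; ring.
      under [RHS]eq_Rintegral => xi _ do rewrite E1.
      rewrite Ri_sum; last first.
        move=> j; apply: IntZ; apply: Int_sum => i; apply: IntZ.
        exact: (IntM (IA i y) (IA j y) (AB i ^~ y) (AB j ^~ y)).
      apply: eq_bigr => j _; rewrite RiZ; last first.
        apply: Int_sum => i; apply: IntZ.
        exact: (IntM (IA i y) (IA j y) (AB i ^~ y) (AB j ^~ y)).
      rewrite Ri_sum; last first.
        move=> i; apply: IntZ.
        exact: (IntM (IA i y) (IA j y) (AB i ^~ y) (AB j ^~ y)).
      rewrite mxE; congr (_ * _); apply: eq_bigr => i _.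
      rewrite RiZ ?SigE //.
      exact: (IntM (IA i y) (IA j y) (AB i ^~ y) (AB j ^~ y)).
    have bnd : \int[P]_xi (dot w (\row_k A k xi y)) ^+ 2 <= dot w w * (4 * L1 ^+ 2).
      rewrite -[X in _ <= X](Ri_cst P); apply: Ri_le.
      - exact: (IntM IdA IdA dB dB).
      - exact: Int_cst.
      move=> xi; have := dB xi; rewrite ler_norml => /andP[h1 h2].
      have e0 := en0 w; have h3 : dot w w = enorm w ^+ 2 by rewrite enorm_sq.
      rewrite h3; nra.
    rewrite -key in bnd.
    by rewrite -(ler_pM2r (dot_pos wnz)) [X in _ <= X]mulrC.
  case: (pselect ([set a | eigenvalue (Sigma y) a] !=set0)) => [ne|nne].
    by apply: ge_sup => // a; exact: ub.
  have -> : [set a | eigenvalue (Sigma y) a] = set0.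
    by apply/seteqP; split => a // ha; apply: nne; exists a.
  by rewrite sup0 mulr_ge0 // exprn_ge0.
Qed.
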